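(* Let $Y$ be a real Banach space, $X$ a closed subspace of $Y$ and $Q:Y\to Y/X$ the quotient map. Let $(B_n)_{n\ge1}$ be a uniformly bounded sequence of bounded operators on $Y$ such that $\lim_{n\to\infty}\|QB_n|_X\|_{X\to Y/X}=0$ and $\limsup_{n\to\infty}\|B_n|_X\|_{X\to Y}\le1$. Then for every $\delta>0$ there is an infinite subset $\mathbb M\subseteq\mathbb N$ such that for all $k\ge1$ and all $n_1<n_2<\dots<n_k$ in $\mathbb M$, $$\|(B_{n_1}B_{n_2}\cdots B_{n_k})|_X\|_{X\to Y}<1+\delta.$$
   Context: For an operator $B$ on $Y$, $\|B|_X\|_{X\to Y}$ denotes the norm of its restriction to $X$. *)

(* Defs.v *)
From Stdlib Require Import Reals Lra List Sorted.
Open Scope R_scope.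

Record Banach := {
  car :> Type;
  vadd : car -> car -> car;
  vopp : car -> car;
  vzero : car;
  vscal : R -> car -> car;
  vnorm : car -> R;
  vadd_assoc : forall x y z, vadd x (vadd y z) = vadd (vadd x y) z;
  vadd_comm : forall x y, vadd x y = vadd y x;
  vadd_0 : forall x, vadd x vzero = x;
  vadd_opp : forall x, vadd x (vopp x) = vzero;
  vscal_1 : forall x, vscal 1 x = x;
  vscal_assoc : forall a b x, vscal a (vscal b x) = vscal (a * b) x;
  vscal_distr_v : forall a x y, vscal a (vadd x y) = vadd (vscal a x) (vscal a y);
  vscal_distr_r : forall a b x, vscal (a + b) x = vadd (vscal a x) (vscal b x);
  vnorm_nonneg : forall x, 0 <= vnorm x;
  vnorm_eq0 : forall x, vnorm x = 0 -> x = vzero;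
  vnorm_scal : forall a x, vnorm (vscal a x) = Rabs a * vnorm x;
  vnorm_triangle : forall x y, vnorm (vadd x y) <= vnorm x + vnorm y;
  vcomplete : forall u : nat -> car,
    (forall eps, eps > 0 -> exists N, forall m n, (m >= N)%nat -> (n >= N)%nat ->
        vnorm (vadd (u m) (vopp (u n))) < eps) ->
    exists l, forall eps, eps > 0 -> exists N, forall n, (n >= N)%nat ->
        vnorm (vadd (u n) (vopp l)) < eps
}.

Arguments vadd {_}. Arguments vopp {_}. Arguments vzero {_}.
Arguments vscal {_}. Arguments vnorm {_}.

Definition vsub {Y : Banach} (x y : Y) : Y := vadd x (vopp y).

Definition closed_subspace (Y : Banach) (X : Y -> Prop) : Prop :=
  X vzero /\
  (forall x y, X x -> X y -> X (vadd x y)) /\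
  (forall a x, X x -> X (vscal a x)) /\
  (forall (u : nat -> Y) (l : Y), (forall n, X (u n)) ->
     (forall eps, eps > 0 -> exists N, forall n, (n >= N)%nat -> vnorm (vsub (u n) l) < eps) ->
     X l).

Definition bounded_operator (Y : Banach) (T : Y -> Y) : Prop :=
  (forall x y, T (vadd x y) = vadd (T x) (T y)) /\
  (forall a x, T (vscal a x) = vscal a (T x)) /\
  (exists C, forall y, vnorm (T y) <= C * vnorm y).

Definition restr_norm_le (Y : Banach) (X : Y -> Prop) (T : Y -> Y) (c : R) : Prop :=
  forall x, X x -> vnorm (T x) <= c * vnorm x.

(* ||Q y||_{Y/X} <= c where ||Q y|| = inf_{z in X} ||y - z|| (quotient norm). *)
Definition quot_norm_le (Y : Banach) (X : Y -> Prop) (y : Y) (c : R) : Prop :=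
  forall eta, eta > 0 -> exists z, X z /\ vnorm (vsub y z) <= c + eta.

Definition quot_restr_norm_le (Y : Banach) (X : Y -> Prop) (T : Y -> Y) (c : R) : Prop :=
  forall x, X x -> quot_norm_le Y X (T x) (c * vnorm x).

(* Composition B_{n1} B_{n2} ... B_{nk} for the list [n1; ...; nk]. *)
Definition comp_list {Y : Banach} (B : nat -> Y -> Y) (l : list nat) : Y -> Y :=
  fold_right (fun n f => fun y => B n (f y)) (fun y => y) l.

(* Main.v *)
Require Import Defs.
From Stdlib Require Import Reals List Sorted Lra Lia Psatz ClassicalEpsilon.
Open Scope R_scope.

Section G.
Variable Y : Banach.

Lemma g_add0l (x : Y) : vadd vzero x = x.
Proof. rewrite vadd_comm; apply vadd_0. Qed.

Lemma g_cancel (s : Y) : vadd s s = s -> s = vzero.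
Proof.
  intro H. transitivity (vadd s (vadd s (vopp s))).
  - rewrite vadd_opp, vadd_0. reflexivity.
  - rewrite vadd_assoc, H, vadd_opp. reflexivity.
Qed.

Lemma g_scal0 (x : Y) : vscal 0 x = vzero.
Proof. apply g_cancel. rewrite <- vscal_distr_r. f_equal; ring. Qed.

Lemma g_uniq (x w : Y) : vadd x w = vzero -> w = vopp x.
Proof.
  intro H. rewrite <- (vadd_0 _ w), <- (vadd_opp _ x), vadd_assoc,
    (vadd_comm _ w x), H, g_add0l. reflexivity.
Qed.

Lemma g_opp_scal (x : Y) : vopp x = vscal (-1) x.
Proof.
  symmetry; apply g_uniq. rewrite <- (vscal_1 _ x) at 1.
  rewrite <- vscal_distr_r. replace (1 + -1) with 0 by ring. apply g_scal0.
Qed.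

Lemma g_norm_opp (x : Y) : vnorm (vopp x) = vnorm x.
Proof. rewrite g_opp_scal, vnorm_scal. replace (Rabs (-1)) with 1. ring. rewrite Rabs_left; lra. Qed.

Lemma g_L1 (z v : Y) : vadd z (vsub v z) = v.
Proof.
  unfold vsub. rewrite (vadd_comm _ v), vadd_assoc, vadd_opp, g_add0l. reflexivity.
Qed.

Lemma g_L2 (a b c : Y) : vsub (vadd a b) c = vadd (vsub a c) b.
Proof.
  unfold vsub. rewrite <- vadd_assoc, (vadd_comm _ b), vadd_assoc. reflexivity.
Qed.

Lemma g_subsym (a b : Y) : vnorm (vsub a b) = vnorm (vsub b a).
Proof.
  assert (H : vsub b a = vopp (vsub a b)).
  { apply g_uniq. unfold vsub. rewrite <- vadd_assoc. rewrite (vadd_assoc _ (vopp b) b).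
    rewrite (vadd_comm _ (vopp b) b), vadd_opp, g_add0l, vadd_opp. reflexivity. }
  rewrite H, g_norm_opp. reflexivity.
Qed.

Lemma g_tri (y z : Y) : vnorm z <= vnorm y + vnorm (vsub y z).
Proof.
  rewrite <- (g_L1 y z) at 1. rewrite (g_subsym y z). apply vnorm_triangle.
Qed.

Lemma g_norm0 : vnorm (@vzero Y) = 0.
Proof.
  rewrite <- (g_scal0 vzero), vnorm_scal, Rabs_R0; ring.
Qed.

Lemma g_subself (x : Y) : vnorm (vsub x x) = 0.
Proof. unfold vsub; rewrite vadd_opp; apply g_norm0. Qed.
End G.

Fixpoint mseq (N : nat -> nat) (j : nat) : nat :=
  match j with 0 => S (N 0%nat) | S k => S (Nat.max (mseq N k) (N (S k))) end.

Lemma mseq_ge N j : (mseq N j >= N j)%nat /\ (mseq N j >= S j)%nat.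
Proof. induction j; simpl; lia. Qed.

Lemma mseq_mono N j j' : (j < j')%nat -> (mseq N j < mseq N j')%nat.
Proof.
  induction 1; simpl; lia.
Qed.

Lemma mseq_mono_inv N j j' : (mseq N j < mseq N j')%nat -> (j < j')%nat.
Proof.
  intro H. destruct (Nat.lt_ge_cases j j') as [|H1]; auto.
  destruct (Nat.eq_dec j j'). subst; lia.
  assert (j' < j)%nat by lia. pose proof (mseq_mono N _ _ H0). lia.
Qed.

Definition epsf (th Cp : R) (j : nat) := th / (8 * (2^j * Cp^j)).
Definition af (th : R) (j : nat) := 1 + th / 2^j.
Definition ef (th Cp : R) (j : nat) := th / (2^j * Cp^j).

Lemma pows th Cp j : 0 < th -> 1 <= Cp -> 1 <= 2^j /\ 1 <= Cp^j.
Proof. intros. split; apply pow_R1_Rle; lra. Qed.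

Lemma epsf_pos th Cp j : 0 < th -> 1 <= Cp -> 0 < epsf th Cp j.
Proof. intros. destruct (pows th Cp j) as [? ?]; auto. unfold epsf.
  apply Rdiv_lt_0_compat; nra. Qed.

Lemma K1 th Cp j : 0 < th <= 1 -> 1 <= Cp ->
  (1 + 2 * epsf th Cp j) * af th (S j) <= af th j.
Proof.
  intros Hth HC. destruct (pows th Cp j) as [Hp Hq]; try lra.
  unfold epsf, af. simpl pow.
  set (p := 2^j) in *; set (q := Cp^j) in *.
  set (w := th / p).
  assert (Hw : 0 < w <= 1).
  { unfold w; split. apply Rdiv_lt_0_compat; lra.
    assert (/p <= 1) by (rewrite <- Rinv_1; apply Rinv_le_contravar; lra).
    assert (0 < /p) by (apply Rinv_0_lt_compat; lra). unfold Rdiv; nra. }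
  assert (E1 : th / (2 * p) = w / 2) by (unfold w; field; lra).
  assert (E2 : th / (8 * (p * q)) = w / (8 * q)) by (unfold w; field; lra).
  assert (E3 : w / (8 * q) <= w / 8).
  { apply Rmult_le_compat_l; [lra|]. apply Rinv_le_contravar; lra. }
  assert (E4 : 0 <= w / (8 * q)) by (left; apply Rdiv_lt_0_compat; lra).
  rewrite E1, E2. fold w. nra.
Qed.

Lemma K2 th Cp j : 0 < th <= 1 -> 1 <= Cp ->
  epsf th Cp j * af th (S j) + Cp * ef th Cp (S j) <= ef th Cp j.
Proof.
  intros Hth HC. destruct (pows th Cp j) as [Hp Hq]; try lra.
  unfold epsf, af, ef. simpl pow.
  set (p := 2^j) in *; set (q := Cp^j) in *.
  set (v := th / (p * q)).
  assert (Hv : 0 < v) by (unfold v; apply Rdiv_lt_0_compat; nra).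
  assert (Hw : th / (2 * p) <= 1 / 2).
  { unfold Rdiv. rewrite Rinv_mult. assert (/p <= 1) by (rewrite <- Rinv_1; apply Rinv_le_contravar; lra).
    assert (0 < /p) by (apply Rinv_0_lt_compat; lra).
    assert (th * / p <= 1) by nra.
    nra. }
  assert (E1 : th / (8 * (p * q)) = v / 8) by (unfold v; field; nra).
  assert (E2 : Cp * (th / (2 * p * (Cp * q))) = v / 2) by (unfold v; field; nra).
  rewrite E1, E2. nra.
Qed.

Lemma af_anti th j i : 0 < th -> (i <= j)%nat -> af th j <= af th i.
Proof.
  intros. unfold af. apply Rplus_le_compat_l. apply Rmult_le_compat_l; [lra|].
  apply Rinv_le_contravar. apply pow_lt; lra. apply Rle_pow; lra || lia.
Qed.

Lemma ef_anti th Cp j i : 0 < th -> 1 <= Cp -> (i <= j)%nat -> ef th Cp j <= ef th Cp i.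
Proof.
  intros. unfold ef. apply Rmult_le_compat_l; [lra|].
  destruct (pows th Cp i) as [? ?]; auto.
  apply Rinv_le_contravar. nra.
  apply Rmult_le_compat; try lra; apply Rle_pow; lra || lia.
Qed.

Theorem lemma4p1 (Y : Banach) (X : Y -> Prop) (B : nat -> Y -> Y) :
  closed_subspace Y X ->
  (forall n, (1 <= n)%nat -> bounded_operator Y (B n)) ->
  (* uniformly bounded *)
  (exists C, forall n, (1 <= n)%nat -> forall y, vnorm (B n y) <= C * vnorm y) ->
  (* lim_n ||Q B_n|_X|| = 0 *)
  (forall eps, eps > 0 -> exists N, forall n, (n >= N)%nat -> (1 <= n)%nat ->
      quot_restr_norm_le Y X (B n) eps) ->
  (* limsup_n ||B_n|_X|| <= 1 *)
  (forall eps, eps > 0 -> exists N, forall n, (n >= N)%nat -> (1 <= n)%nat ->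
      restr_norm_le Y X (B n) (1 + eps)) ->
  forall delta, delta > 0 ->
  exists M : nat -> Prop,
    (forall m, M m -> (1 <= m)%nat) /\
    (forall N, exists m, (m >= N)%nat /\ M m) /\
    (forall l : list nat, l <> nil -> Sorted lt l -> Forall M l ->
       exists c, c < 1 + delta /\ restr_norm_le Y X (comp_list B l) c).
Proof.
  intros HX Hlin [C HC] Hq Hr delta Hdelta.
  set (Cp := Rmax C 1).
  assert (HCp : 1 <= Cp) by apply Rmax_r.
  assert (HCb : forall n, (1 <= n)%nat -> forall y, vnorm (B n y) <= Cp * vnorm y).
  { intros n Hn y. eapply Rle_trans. apply HC; auto.
    apply Rmult_le_compat_r. apply vnorm_nonneg. apply Rmax_l. }
  set (th := Rmin 1 (delta / 4)).
  assert (Hth : 0 < th <= 1).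
  { unfold th; split. apply Rmin_glb_lt; lra. apply Rmin_l. }
  assert (Hth2 : th <= delta / 4) by apply Rmin_r.
  assert (HNq : forall j, {N | forall n, (n >= N)%nat -> (1 <= n)%nat ->
      quot_restr_norm_le Y X (B n) (epsf th Cp j / 2)}).
  { intro j; apply constructive_indefinite_description; apply Hq.
    pose proof (epsf_pos th Cp j). lra. }
  assert (HNr : forall j, {N | forall n, (n >= N)%nat -> (1 <= n)%nat ->
      restr_norm_le Y X (B n) (1 + epsf th Cp j)}).
  { intro j; apply constructive_indefinite_description; apply Hr.
    pose proof (epsf_pos th Cp j). lra. }
  set (N := fun j => Nat.max (proj1_sig (HNq j)) (proj1_sig (HNr j))).
  set (m := mseq N).
  assert (Hmq : forall j, quot_restr_norm_le Y X (B (m j)) (epsf th Cp j / 2)).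
  { intro j. destruct (mseq_ge N j). apply (proj2_sig (HNq j)); unfold m, N in *; lia. }
  assert (Hmr : forall j, restr_norm_le Y X (B (m j)) (1 + epsf th Cp j)).
  { intro j. destruct (mseq_ge N j). apply (proj2_sig (HNr j)); unfold m, N in *; lia. }
  assert (Hm1 : forall j, (1 <= m j)%nat).
  { intro j. destruct (mseq_ge N j). unfold m; lia. }
  assert (HX0 : forall x y, X x -> X y -> X (vadd x y)) by apply HX.
  assert (INV : forall l i, Sorted lt l ->
     Forall (fun n => exists j, (j >= i)%nat /\ m j = n) l ->
     forall x, X x -> 0 < vnorm x -> exists z, X z /\
       vnorm z <= af th i * vnorm x /\
       vnorm (vsub (comp_list B l x) z) <= ef th Cp i * vnorm x).
  { induction l as [|n l IH]; intros i Hs Hf x Hx Hnx.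
    - exists x. split; [auto|split].
      + assert (1 <= af th i).
        { unfold af. assert (0 < 2 ^ i) by (apply pow_lt; lra).
          assert (0 <= th / 2^i) by (left; apply Rdiv_lt_0_compat; lra). lra. }
        nra.
      + simpl. rewrite g_subself.
        assert (0 <= ef th Cp i).
        { unfold ef. destruct (pows th Cp i) as [? ?]; try lra.
          left; apply Rdiv_lt_0_compat; nra. }
        nra.
    - inversion Hf as [|? ? [j [Hji Hmj]] Hft]; subst.
      assert (Hsl : Sorted lt l) by (inversion Hs; auto).
      assert (Hlt : Forall (lt (m j)) l).
      { apply (Sorted_extends (R:=lt)); auto. intros a b c; lia. }
      assert (Hft' : Forall (fun n => exists j', (j' >= S j)%nat /\ m j' = n) l).
      { rewrite Forall_forall in *. intros t Ht.
        destruct (Hft t Ht) as [j' [_ Hj']]. exists j'. split; auto.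
        specialize (Hlt t Ht). subst t. apply mseq_mono_inv in Hlt. lia. }
      destruct (IH (S j) Hsl Hft' x Hx Hnx) as [z [Hz [Hza Hze]]].
      set (v := comp_list B l x) in *.
      set (ej := epsf th Cp j).
      assert (Hej : 0 < ej) by (apply epsf_pos; lra).
      assert (Hnz : vnorm (B (m j) z) <= (1 + ej) * vnorm z) by (apply Hmr; auto).
      destruct (Hmq j z Hz (ej / 2 * vnorm x)) as [z' [Hz' Hz'e]].
      { apply Rmult_lt_0_compat; lra. }
      fold ej in Hz'e.
      assert (Ha1 : 1 <= af th (S j)).
      { unfold af. assert (0 < 2 ^ S j) by (apply pow_lt; lra).
        assert (0 <= th / 2^ S j) by (left; apply Rdiv_lt_0_compat; lra). lra. }
      assert (Hz0 : 0 <= vnorm z) by apply vnorm_nonneg.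
      assert (Hd : vnorm (vsub (B (m j) z) z') <= ej * af th (S j) * vnorm x).
      { assert (ej / 2 * vnorm z <= ej / 2 * (af th (S j) * vnorm x))
          by (apply Rmult_le_compat_l; lra).
        assert (vnorm x <= af th (S j) * vnorm x) by nra. nra. }
      exists z'. split; [auto|split].
      + eapply Rle_trans. apply (g_tri _ (B (m j) z)).
        eapply Rle_trans with ((1 + 2 * ej) * af th (S j) * vnorm x). nra.
        apply Rmult_le_compat_r; [lra|].
        eapply Rle_trans. apply K1; lra. apply af_anti; lia || lra.
      + simpl. fold v.
        destruct (Hlin (m j) (Hm1 j)) as [Hadd _].
        rewrite <- (g_L1 _ z v), Hadd, g_L2.
        eapply Rle_trans. apply vnorm_triangle.
        pose proof (HCb (m j) (Hm1 j) (vsub v z)).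
        eapply Rle_trans with ((ej * af th (S j) + Cp * ef th Cp (S j)) * vnorm x). nra.
        apply Rmult_le_compat_r; [lra|].
        eapply Rle_trans. apply K2; lra. apply ef_anti; lia || lra. }
  exists (fun n => exists j, m j = n). split; [|split].
  - intros k [j Hj]; subst; auto.
  - intro K. exists (m K). split; [|eauto]. destruct (mseq_ge N K). unfold m; lia.
  - intros l _ Hs Hf. exists (1 + 2 * th). split; [lra|].
    intros x Hx.
    assert (Hf' : Forall (fun n => exists j, (j >= 0)%nat /\ m j = n) l).
    { rewrite Forall_forall in *. intros t Ht. destruct (Hf t Ht) as [j Hj].
      exists j; split; [lia|auto]. }
    destruct (Rle_lt_or_eq_dec 0 (vnorm x) (vnorm_nonneg _ x)) as [Hpos|H0].
    + destruct (INV l 0%nat Hs Hf' x Hx Hpos) as [z [Hz [Hza Hze]]].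
      unfold af, ef in *. simpl in Hza, Hze.
      rewrite <- (g_L1 _ z (comp_list B l x)).
      eapply Rle_trans. apply vnorm_triangle.
      replace (th / 1) with th in Hza by field.
      replace (th / (1 * 1)) with th in Hze by field. nra.
    + symmetry in H0. apply vnorm_eq0 in H0 as Hx0. subst x. rewrite g_norm0.
      assert (comp_list B l vzero = vzero).
      { clear -Hf HCb Hm1. induction l as [|n l IH]; simpl; auto.
        inversion Hf as [|? ? [j Hj] Hft]; subst. rewrite IH by auto.
        apply vnorm_eq0. pose proof (HCb (m j) (Hm1 j) vzero).
        rewrite g_norm0 in H. pose proof (vnorm_nonneg _ (B (m j) vzero)). nra. }
      rewrite H, g_norm0. lra.
Qed.
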